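(* Let $G$ be a finite group, $R\subseteq\mathbb{R}^G$ the space of real matrix coefficients $R_\rho$ of some self-conjugate representation $\rho$ of $G$, and $W=(A,B,C)$, $A,B,C\in\mathbb{R}^{m\times G}$. Suppose $\{1,\dots,m\}=S_1\sqcup S_2$ such that for $i\in S_1$ the $i$-th rows of $A,B,C$ lie in $R$ and for $i\in S_2$ the $i$-th rows of $A,B,C$ lie in $R^\perp$. Then for every $\eta>0$ the same property (with the same $S_1,S_2$) holds for $\mathrm{GD}(W)$, and hence for $\mathrm{GD}^t(W)$ for all $t\ge0$.
   Context: A representation is a homomorphism $\rho:G\to GL(\mathbb{C}^d)$; it is self-conjugate if isomorphic to its entrywise conjugate. For such $\rho$, $R_\rho\subseteq\mathbb{R}^G$ is the real span of the real and imaginary parts of the functions $g\mapsto\rho(g)_{ij}$, $i,j\in[d]$. $R^\perp$ is the orthogonal complement in $\mathbb{R}^G$ with the standard inner product. The Hadamard model computes $f_{\mathrm{HD}}(x,y;W)=C^T(Ax\odot By)$ ($\odot$ entrywise product); $1_g$ is the indicator vector of $g$; the loss is $L(W)=\frac{1}{|G|^3}\sum_{a,b\in G}\|f_{\mathrm{HD}}(1_a,1_b;W)-1_{ab}\|_2^2$, and $\mathrm{GD}(W)=W-\eta\nabla_WL(W)$ with $\mathrm{GD}^t$ its $t$-fold iterate. *)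

(* Defs.v *)
From HB Require Import structures.
From mathcomp Require Import all_boot all_order all_algebra all_fingroup.
From mathcomp Require Import mxrepresentation.
From mathcomp Require Import all_classical all_reals all_analysis.
From mathcomp Require Import complex.
Set Implicit Arguments. Unset Strict Implicit. Unset Printing Implicit Defensive.
Import Order.TTheory GRing.Theory Num.Theory.
Local Open Scope ring_scope.

Section Defs.
Variables (R : realType) (gT : finGroupType).

(* self-conjugate: isomorphic to its entrywise conjugate, i.e. there is an
   invertible P with P rho(g) P^-1 = conj(rho(g)) for all g. *)
Definition self_conjugate d (rho : mx_representation (complex R) [set: gT]%G d) :=
  exists2 P : 'M[complex R]_d, P \in unitmx &
    forall g : gT, P *m rho g = map_mx (@Num.conj _) (rho g) *m P.

Definition in_Rrho d (rho : mx_representation (complex R) [set: gT]%G d)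
    (v : gT -> R) :=
  exists (c c' : 'I_d -> 'I_d -> R), forall g : gT,
    v g = \sum_(i < d) \sum_(j < d)
            (c i j * complex.Re (rho g i j) + c' i j * complex.Im (rho g i j)).

Definition in_Rrho_perp d (rho : mx_representation (complex R) [set: gT]%G d)
    (v : gT -> R) :=
  forall u, in_Rrho rho u -> \sum_(g : gT) u g * v g = 0.

(* Weights W = (A,B,C), A,B,C in R^{m x G}, packed as W k for k : 'I_3
   (k = 0 : A, k = 1 : B, k = 2 : C); W k i g is the (i,g) entry. *)
Definition weights m := 'I_3 -> 'I_m -> gT -> R.

Definition wA m (W : weights m) := W ord0.
Definition wB m (W : weights m) := W (lift ord0 ord0).
Definition wC m (W : weights m) := W ord_max.

Definition fHD m (W : weights m) (x y : gT -> R) : gT -> R :=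
  fun g => \sum_(i < m) wC W i g *
     ((\sum_(h : gT) wA W i h * x h) * (\sum_(h : gT) wB W i h * y h)).

Definition indic (a : gT) : gT -> R := fun g => (g == a)%:R.

Definition loss m (W : weights m) : R :=
  (#|gT|%:R ^+ 3)^-1 * \sum_(a : gT) \sum_(b : gT)
     \sum_(g : gT) (fHD W (indic a) (indic b) g - indic (a * b)%g g) ^+ 2.

Definition bump m (W : weights m) k i g (t : R) : weights m :=
  fun k' i' g' => W k' i' g' + (if [&& k' == k, i' == i & g' == g] then t else 0).

Definition gradL m (W : weights m) : weights m :=
  fun k i g => derive1 (fun t => loss (bump W k i g t)) 0.

Definition GD m (eta : R) (W : weights m) : weights m :=
  fun k i g => W k i g - eta * gradL W k i g.

Definition rows_split d (rho : mx_representation (complex R) [set: gT]%G d)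
    m (S1 : {set 'I_m}) (W : weights m) :=
  forall k : 'I_3, forall i : 'I_m,
    (i \in S1 -> in_Rrho rho (W k i)) /\
    (i \notin S1 -> in_Rrho_perp rho (W k i)).

End Defs.

(* Main.v *)
Require Import Defs.
From HB Require Import structures.
From mathcomp Require Import all_boot all_order all_algebra all_fingroup.
From mathcomp Require Import mxrepresentation.
From mathcomp Require Import all_classical all_reals all_analysis.
From mathcomp Require Import complex.
From mathcomp Require Import ring lra.
From mathcomp Require Import ring lra.
Import Order.TTheory GRing.Theory Num.Theory.
Local Open Scope ring_scope.

Section Rep.
Variables (R : realType) (gT : finGroupType) (d : nat)
  (rho : mx_representation (complex R) [set: gT]%G d).

Local Notation Re := (@complex.Re R).
Local Notation Im := (@complex.Im R).

Lemma ReD (x y : complex R) : Re (x + y) = Re x + Re y.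
Proof. by case: x; case: y. Qed.

Lemma Re_sum (I : Type) (r : seq I) (P : pred I) (F : I -> complex R) :
  Re (\sum_(i <- r | P i) F i) = \sum_(i <- r | P i) Re (F i).
Proof. by apply: (big_morph _ ReD). Qed.

Lemma ReZ (r : R) (z : complex R) : Re ((r +i* 0)%C * z) = r * Re z.
Proof. by case: z => a b /=; rewrite mul0r subr0. Qed.

Lemma ReM (z w : complex R) : Re (z * w) = Re z * Re w - Im z * Im w.
Proof. by case: z; case: w. Qed.

Definition inRz (v : gT -> R) := exists z : 'I_d -> 'I_d -> complex R,
  forall g, v g = Re (\sum_i \sum_j z i j * rho g i j).

Lemma inRzP v : in_Rrho rho v <-> inRz v.
Proof.
split.
- case=> c [c' Hc]; exists (fun i j => (c i j +i* - c' i j)%C) => g.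
  rewrite Hc Re_sum; apply: eq_bigr => i _; rewrite Re_sum; apply: eq_bigr => j _.
  by rewrite ReM /= mulNr opprK.
- case=> z Hz; exists (fun i j => Re (z i j)), (fun i j => - Im (z i j)) => g.
  rewrite Hz Re_sum; apply: eq_bigr => i _; rewrite Re_sum; apply: eq_bigr => j _.
  by rewrite ReM mulNr.
Qed.

Lemma inRz_sum (I : finType) (c : I -> R) (u : I -> gT -> R) :
  (forall x, inRz (u x)) -> inRz (fun g => \sum_x c x * u x g).
Proof.
move=> /fin_all_exists [z Hz].
exists (fun i j => \sum_x (c x +i* 0)%C * z x i j) => g.
under eq_bigr => x _ do rewrite Hz.
under [in RHS]eq_bigr => i _ do under eq_bigr => j _ do rewrite mulr_suml.
under [in RHS]eq_bigr => i _ do rewrite exchange_big /=.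
rewrite exchange_big Re_sum; apply: eq_bigr => x _.
rewrite -ReZ; congr Re; rewrite mulr_sumr; apply: eq_bigr => i _.
by rewrite mulr_sumr; apply: eq_bigr => j _; rewrite mulrA.
Qed.

Lemma rhoM g h i j : rho (g * h)%g i j = \sum_k rho g i k * rho h k j.
Proof. by rewrite repr_mxM ?inE // mxE. Qed.

Lemma inRz_r (v : gT -> R) h : inRz v -> inRz (fun g => v (g * h)%g).
Proof.
case=> z Hz; exists (fun i k => \sum_j z i j * rho h k j) => g.
rewrite Hz; congr Re; apply: eq_bigr => i _.
under eq_bigr => j _ do rewrite rhoM mulr_sumr.
rewrite exchange_big; apply: eq_bigr => k _.
rewrite mulr_suml; apply: eq_bigr => j _; ring.
Qed.

Lemma inRz_l (v : gT -> R) h : inRz v -> inRz (fun g => v (h * g)%g).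
Proof.
case=> z Hz; exists (fun k j => \sum_i z i j * rho h i k) => g.
rewrite Hz; congr Re.
under eq_bigr => i _ do under eq_bigr => j _ do rewrite rhoM mulr_sumr.
under eq_bigr => i _ do rewrite exchange_big.
rewrite exchange_big; apply: eq_bigr => k _.
rewrite exchange_big; apply: eq_bigr => j _.
by rewrite mulr_suml; apply: eq_bigr => i _; rewrite mulrA.
Qed.


Lemma perp_sum (I : finType) (c : I -> R) (u : I -> gT -> R) :
  (forall x, in_Rrho_perp rho (u x)) -> in_Rrho_perp rho (fun g => \sum_x c x * u x g).
Proof.
move=> H w Hw.
under eq_bigr => g _ do rewrite mulr_sumr.
rewrite exchange_big big1 // => x _.
under eq_bigr => g _ do rewrite mulrCA.
by rewrite -mulr_sumr H ?mulr0.
Qed.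

Lemma in_Rrho_r (v : gT -> R) h : in_Rrho rho v -> in_Rrho rho (fun g => v (g * h)%g).
Proof. by move=> H; apply/inRzP; apply: inRz_r; apply/inRzP. Qed.

Lemma in_Rrho_l (v : gT -> R) h : in_Rrho rho v -> in_Rrho rho (fun g => v (h * g)%g).
Proof. by move=> H; apply/inRzP; apply: inRz_l; apply/inRzP. Qed.

Lemma in_Rrho_sum (I : finType) (c : I -> R) (u : I -> gT -> R) :
  (forall x, in_Rrho rho (u x)) -> in_Rrho rho (fun g => \sum_x c x * u x g).
Proof. by move=> H; apply/inRzP/inRz_sum => x; apply/inRzP. Qed.

Lemma perp_r (v : gT -> R) h : in_Rrho_perp rho v -> in_Rrho_perp rho (fun g => v (g * h)%g).
Proof.
move=> Hv u Hu.
rewrite (reindex_inj (mulIg h^-1%g)) /=.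
under eq_bigr => g _ do rewrite mulgKV.
by apply: Hv; apply: in_Rrho_r.
Qed.

Lemma perp_l (v : gT -> R) h : in_Rrho_perp rho v -> in_Rrho_perp rho (fun g => v (h * g)%g).
Proof.
move=> Hv u Hu.
rewrite (reindex_inj (mulgI h^-1%g)) /=.
under eq_bigr => g _ do rewrite mulKVg.
by apply: Hv; apply: in_Rrho_l.
Qed.

End Rep.
Lemma quad_deriv (R : realType) (a b c : R) :
  derive1 (fun t : R => a + t * b + t ^+ 2 * c) 0 = b.
Proof.
have -> : (fun t : R => a + t * b + t ^+ 2 * c) = horner (a%:P + 'X * b%:P + 'X^2 * c%:P).
  by apply/funext => t /=; rewrite !(hornerD, hornerM, hornerX, hornerC, hornerXn).
by rewrite -derivE !(derivD, derivM, derivC, derivX, derivXn) !hornerE /= !addr0.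
Qed.

Lemma sum_quad (R : realType) (T : finType) (x y z : T -> R) t :
  \sum_s (x s + t * y s + t ^+ 2 * z s) =
  \sum_s x s + t * \sum_s y s + t ^+ 2 * \sum_s z s.
Proof. by rewrite !big_split /= -!mulr_sumr. Qed.

Lemma deriv_sq3 (R : realType) (T : finType) (F Q : T -> T -> T -> R) (K : R) :
  derive1 (fun t => K * \sum_a \sum_b \sum_c (F a b c + t * Q a b c) ^+ 2) 0 =
  K * \sum_a \sum_b \sum_c 2 * F a b c * Q a b c.
Proof.
have -> : (fun t => K * \sum_a \sum_b \sum_c (F a b c + t * Q a b c) ^+ 2) =
  (fun t => K * \sum_a \sum_b \sum_c F a b c ^+ 2 +
            t * (K * \sum_a \sum_b \sum_c 2 * F a b c * Q a b c) +
            t ^+ 2 * (K * \sum_a \sum_b \sum_c Q a b c ^+ 2)).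
  apply/funext => t /=.
  have e : forall a b c, (F a b c + t * Q a b c) ^+ 2 =
     F a b c ^+ 2 + t * (2 * F a b c * Q a b c) + t ^+ 2 * Q a b c ^+ 2.
    by move=> a b c; rewrite sqrrD exprMn; ring.
  under eq_bigr => a _ do under eq_bigr => b _ do (under eq_bigr => c _ do rewrite e; rewrite sum_quad).
  under eq_bigr => a _ do rewrite sum_quad.
  rewrite sum_quad; ring.
exact: quad_deriv.
Qed.

Section Grad.
Variables (R : realType) (gT : finGroupType) (m : nat).

Lemma sum_ind1 (T : finType) (x : T) (X : T -> R) :
  \sum_y (y == x)%:R * X y = X x.
Proof.
rewrite (bigD1 x) //= eqxx mul1r big1 ?addr0 // => y /negbTE ->.
by rewrite mul0r.
Qed.

Lemma sum_ind2 (T : finType) (x : T) (X : T -> R) :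
  \sum_y X y * (y == x)%:R = X x.
Proof. by under eq_bigr => y _ do rewrite mulrC; rewrite sum_ind1. Qed.

Lemma fHD_ind (W : weights R gT m) a b g :
  fHD W (Defs.indic R a) (Defs.indic R b) g = \sum_j wC W j g * (wA W j a * wB W j b).
Proof. by rewrite /fHD; apply: eq_bigr => j _; rewrite /Defs.indic !sum_ind2. Qed.

Lemma bump_if (b : bool) (t : R) : (if b then t else 0) = b%:R * t.
Proof. by case: b; rewrite ?mul1r ?mul0r. Qed.

Lemma andR (b1 b2 : bool) (t : R) : (b1 && b2)%:R * t = b1%:R * (b2%:R * t).
Proof. by rewrite -mulnb natrM mulrA. Qed.

Lemma bumpA (W : weights R gT m) i g t :
  [/\ forall j a, wA (Defs.bump W ord0 i g t) j a = wA W j a + (j == i)%:R * ((a == g)%:R * t),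
      forall j a, wB (Defs.bump W ord0 i g t) j a = wB W j a &
      forall j a, wC (Defs.bump W ord0 i g t) j a = wC W j a].
Proof. by rewrite /wA /wB /wC /Defs.bump; split => j a /=; rewrite ?bump_if ?addr0 ?andR. Qed.

Lemma bumpB (W : weights R gT m) i g t :
  [/\ forall j a, wA (Defs.bump W (lift ord0 ord0) i g t) j a = wA W j a,
      forall j a, wB (Defs.bump W (lift ord0 ord0) i g t) j a = wB W j a + (j == i)%:R * ((a == g)%:R * t) &
      forall j a, wC (Defs.bump W (lift ord0 ord0) i g t) j a = wC W j a].
Proof. by rewrite /wA /wB /wC /Defs.bump; split => j a /=; rewrite ?bump_if ?addr0 ?andR. Qed.

Lemma bumpC (W : weights R gT m) i g t :
  [/\ forall j a, wA (Defs.bump W ord_max i g t) j a = wA W j a,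
      forall j a, wB (Defs.bump W ord_max i g t) j a = wB W j a &
      forall j a, wC (Defs.bump W ord_max i g t) j a = wC W j a + (j == i)%:R * ((a == g)%:R * t)].
Proof. by rewrite /wA /wB /wC /Defs.bump; split => j a /=; rewrite ?bump_if ?addr0 ?andR. Qed.

Local Notation ind := (Defs.indic R).

Lemma fHD_bumpA (W : weights R gT m) i g t a b g' :
  fHD (Defs.bump W ord0 i g t) (ind a) (ind b) g' =
  fHD W (ind a) (ind b) g' + t * ((a == g)%:R * (wC W i g' * wB W i b)).
Proof.
case: (bumpA W i g t) => HA HB HC; rewrite !fHD_ind.
under eq_bigr => j _ do rewrite HA HB HC mulrDl mulrDr.
rewrite big_split /=; congr (_ + _).
rewrite (eq_bigr (fun j => (j == i)%:R *
   (wC W j g' * ((a == g)%:R * t) * wB W j b))); last by move=> j _; ring.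
by rewrite sum_ind1; ring.
Qed.

Lemma fHD_bumpB (W : weights R gT m) i g t a b g' :
  fHD (Defs.bump W (lift ord0 ord0) i g t) (ind a) (ind b) g' =
  fHD W (ind a) (ind b) g' + t * ((b == g)%:R * (wC W i g' * wA W i a)).
Proof.
case: (bumpB W i g t) => HA HB HC; rewrite !fHD_ind.
under eq_bigr => j _ do rewrite HA HB HC mulrDr mulrDr.
rewrite big_split /=; congr (_ + _).
rewrite (eq_bigr (fun j => (j == i)%:R *
   (wC W j g' * ((b == g)%:R * t) * wA W j a))); last by move=> j _; ring.
by rewrite sum_ind1; ring.
Qed.

Lemma fHD_bumpC (W : weights R gT m) i g t a b g' :
  fHD (Defs.bump W ord_max i g t) (ind a) (ind b) g' =
  fHD W (ind a) (ind b) g' + t * ((g' == g)%:R * (wA W i a * wB W i b)).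
Proof.
case: (bumpC W i g t) => HA HB HC; rewrite !fHD_ind.
under eq_bigr => j _ do rewrite HA HB HC mulrDl.
rewrite big_split /=; congr (_ + _).
rewrite (eq_bigr (fun j => (j == i)%:R *
   (((g' == g)%:R * t) * (wA W j a * wB W j b)))); last by move=> j _; ring.
by rewrite sum_ind1; ring.
Qed.

Lemma gradL_eq (W : weights R gT m) k i g (Q : gT -> gT -> gT -> R) :
  (forall t a b g', fHD (Defs.bump W k i g t) (ind a) (ind b) g' =
      fHD W (ind a) (ind b) g' + t * Q a b g') ->
  gradL W k i g = (#|gT|%:R ^+ 3)^-1 * \sum_a \sum_b \sum_g'
      2 * (fHD W (ind a) (ind b) g' - ind (a * b)%g g') * Q a b g'.
Proof.
move=> H; rewrite /gradL.
have -> : (fun t => loss (Defs.bump W k i g t)) = (fun t => (#|gT|%:R ^+ 3)^-1 *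
   \sum_a \sum_b \sum_g' ((fHD W (ind a) (ind b) g' - ind (a * b)%g g') + t * Q a b g') ^+ 2).
  apply/funext => t; rewrite /loss; congr (_ * _).
  apply: eq_bigr => a _; apply: eq_bigr => b _; apply: eq_bigr => g' _.
  by rewrite H addrAC.
exact: deriv_sq3.
Qed.


Lemma collapse_a (g : gT) (Y : gT -> gT -> gT -> R) (X : gT -> gT -> R) :
  \sum_a \sum_b \sum_c Y a b c * ((a == g)%:R * X b c) = \sum_b \sum_c Y g b c * X b c.
Proof.
rewrite -(@sum_ind1 _ g (fun a => \sum_b \sum_c Y a b c * X b c)).
apply: eq_bigr => a _; rewrite mulr_sumr; apply: eq_bigr => b _.
rewrite mulr_sumr; apply: eq_bigr => c _; ring.
Qed.

Lemma collapse_b (g : gT) (Y : gT -> gT -> gT -> R) (X : gT -> gT -> R) :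
  \sum_a \sum_b \sum_c Y a b c * ((b == g)%:R * X a c) = \sum_a \sum_c Y a g c * X a c.
Proof.
apply: eq_bigr => a _.
rewrite -(@sum_ind1 _ g (fun b => \sum_c Y a b c * X a c)).
apply: eq_bigr => b _; rewrite mulr_sumr; apply: eq_bigr => c _; ring.
Qed.

Lemma collapse_c (g : gT) (Y : gT -> gT -> gT -> R) (X : gT -> gT -> R) :
  \sum_a \sum_b \sum_c Y a b c * ((c == g)%:R * X a b) = \sum_a \sum_b Y a b g * X a b.
Proof.
apply: eq_bigr => a _; apply: eq_bigr => b _.
rewrite -(@sum_ind1 _ g (fun c => Y a b c * X a b)).
apply: eq_bigr => c _; ring.
Qed.

Lemma split2 (p : 'I_m -> gT -> gT -> R) (u : 'I_m -> R) (e X : gT -> gT -> R) :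
  \sum_x \sum_y 2 * (\sum_j p j x y * u j - e x y) * X x y =
  \sum_j (\sum_x \sum_y 2 * p j x y * X x y) * u j - \sum_x \sum_y 2 * e x y * X x y.
Proof.
have e1 : forall x y, 2 * (\sum_j p j x y * u j - e x y) * X x y =
    \sum_j (2 * p j x y * X x y) * u j - 2 * e x y * X x y.
  move=> x y; rewrite mulrBr mulrBl mulr_sumr mulr_suml; congr (_ - _).
  by apply: eq_bigr => j _; ring.
under eq_bigr => x _ do (under eq_bigr => y _ do rewrite e1; rewrite sumrB).
rewrite sumrB; congr (_ - _).
under [in RHS]eq_bigr => j _ do rewrite mulr_suml.
rewrite [in RHS]exchange_big; apply: eq_bigr => x _.
under [in RHS]eq_bigr => y _ do rewrite mulr_suml.
by rewrite [in RHS]exchange_big.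
Qed.

Definition dotp (u v : gT -> R) := \sum_g u g * v g.

Lemma gradA (W : weights R gT m) i g :
  gradL W ord0 i g = (#|gT|%:R ^+ 3)^-1 *
   (\sum_j (2 * (dotp (wB W j) (wB W i) * dotp (wC W j) (wC W i))) * wA W j g
    - \sum_b (2 * wB W i b) * wC W i (g * b)%g).
Proof.
rewrite (@gradL_eq W ord0 i g (fun a b g' => (a == g)%:R * (wC W i g' * wB W i b))); last first.
  by move=> *; apply: fHD_bumpA.
congr (_ * _).
rewrite (collapse_a g (fun a b g' => 2 * (fHD W (ind a) (ind b) g' - ind (a * b)%g g'))
           (fun b g' => wC W i g' * wB W i b)).
under eq_bigr => b _ do under eq_bigr => g' _ do rewrite fHD_ind.
transitivity (\sum_x \sum_y 2 * (\sum_j (wC W j y * wB W j x) * wA W j g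
     - ind (g * x)%g y) * (wC W i y * wB W i x)).
  apply: eq_bigr => b _; apply: eq_bigr => g' _; congr (2 * (_ - _) * _).
  by apply: eq_bigr => j _; ring.
rewrite (split2 (fun j x y => wC W j y * wB W j x) (fun j => wA W j g)
   (fun x y => ind (g * x)%g y) (fun x y => wC W i y * wB W i x)).
congr (_ - _).
  apply: eq_bigr => j _; congr (_ * _); rewrite /dotp mulr_suml mulr_sumr.
  apply: eq_bigr => b _; rewrite !mulr_sumr; apply: eq_bigr => g' _; ring.
apply: eq_bigr => b _; rewrite /Defs.indic.
rewrite (eq_bigr (fun y => (y == (g * b)%g)%:R * (2 * wC W i y * wB W i b))).
  by rewrite sum_ind1; ring.
by move=> y _; ring.
Qed.


Lemma gradB (W : weights R gT m) i g :
  gradL W (lift ord0 ord0) i g = (#|gT|%:R ^+ 3)^-1 *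
   (\sum_j (2 * (dotp (wA W j) (wA W i) * dotp (wC W j) (wC W i))) * wB W j g
    - \sum_a (2 * wA W i a) * wC W i (a * g)%g).
Proof.
rewrite (@gradL_eq W (lift ord0 ord0) i g (fun a b g' => (b == g)%:R * (wC W i g' * wA W i a))); last first.
  by move=> *; apply: fHD_bumpB.
congr (_ * _).
rewrite (collapse_b g (fun a b g' => 2 * (fHD W (ind a) (ind b) g' - ind (a * b)%g g'))
           (fun a g' => wC W i g' * wA W i a)).
under eq_bigr => b _ do under eq_bigr => g' _ do rewrite fHD_ind.
transitivity (\sum_x \sum_y 2 * (\sum_j (wC W j y * wA W j x) * wB W j g
     - ind (x * g)%g y) * (wC W i y * wA W i x)).
  apply: eq_bigr => b _; apply: eq_bigr => g' _; congr (2 * (_ - _) * _).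
  by apply: eq_bigr => j _; ring.
rewrite (split2 (fun j x y => wC W j y * wA W j x) (fun j => wB W j g)
   (fun x y => ind (x * g)%g y) (fun x y => wC W i y * wA W i x)).
congr (_ - _).
  apply: eq_bigr => j _; congr (_ * _); rewrite /dotp mulr_suml mulr_sumr.
  apply: eq_bigr => b _; rewrite !mulr_sumr; apply: eq_bigr => g' _; ring.
apply: eq_bigr => b _; rewrite /Defs.indic.
rewrite (eq_bigr (fun y => (y == (b * g)%g)%:R * (2 * wC W i y * wA W i b))).
  by rewrite sum_ind1; ring.
by move=> y _; ring.
Qed.

Lemma eq_inv (a b g : gT) : (g == (a * b)%g) = (b == (a^-1 * g)%g).
Proof.
apply/eqP/eqP => [->|->]; first by rewrite mulKg.
by rewrite mulKVg.
Qed.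

Lemma gradC (W : weights R gT m) i g :
  gradL W ord_max i g = (#|gT|%:R ^+ 3)^-1 *
   (\sum_j (2 * (dotp (wA W j) (wA W i) * dotp (wB W j) (wB W i))) * wC W j g
    - \sum_a (2 * wA W i a) * wB W i (a^-1 * g)%g).
Proof.
rewrite (@gradL_eq W ord_max i g (fun a b g' => (g' == g)%:R * (wA W i a * wB W i b))); last first.
  by move=> *; apply: fHD_bumpC.
congr (_ * _).
rewrite (collapse_c g (fun a b g' => 2 * (fHD W (ind a) (ind b) g' - ind (a * b)%g g'))
           (fun a b => wA W i a * wB W i b)).
under eq_bigr => b _ do under eq_bigr => g' _ do rewrite fHD_ind.
transitivity (\sum_x \sum_y 2 * (\sum_j (wA W j x * wB W j y) * wC W j g
     - ind (x * y)%g g) * (wA W i x * wB W i y)).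
  apply: eq_bigr => b _; apply: eq_bigr => g' _; congr (2 * (_ - _) * _).
  by apply: eq_bigr => j _; ring.
rewrite (split2 (fun j x y => wA W j x * wB W j y) (fun j => wC W j g)
   (fun x y => ind (x * y)%g g) (fun x y => wA W i x * wB W i y)).
congr (_ - _).
  apply: eq_bigr => j _; congr (_ * _); rewrite /dotp mulr_suml mulr_sumr.
  apply: eq_bigr => b _; rewrite !mulr_sumr; apply: eq_bigr => g' _; ring.
apply: eq_bigr => a _; rewrite /Defs.indic.
under eq_bigr => y _ do rewrite eq_inv.
rewrite (eq_bigr (fun y => (y == (a^-1 * g)%g)%:R * (2 * wA W i a * wB W i y))).
  by rewrite sum_ind1; ring.
by move=> y _; ring.
Qed.

End Grad.
Arguments dotp {R gT}.

Section Gen.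
Variables (R : realType) (gT : finGroupType) (m : nat) (P : (gT -> R) -> Prop).
Hypothesis Psum : forall (I : finType) (c : I -> R) (u : I -> gT -> R),
  (forall x, P (u x)) -> P (fun g => \sum_x c x * u x g).
Hypothesis Pr : forall v h, P v -> P (fun g => v (g * h)%g).
Hypothesis Pl : forall v h, P v -> P (fun g => v (h * g)%g).

Lemma Pext {u v} : P u -> (forall g, u g = v g) -> P v.
Proof. by move=> Pu e; have <- : u = v by apply/funext. Qed.

Lemma P0 : P (fun _ => 0).
Proof.
apply: (Pext (@Psum 'I_0 (fun _ => 0) (fun _ _ => 0) _)); first by case.
by move=> g; rewrite big_ord0.
Qed.

Lemma Psum0 (I : finType) (c : I -> R) (u : I -> gT -> R) :
  (forall x, c x = 0 \/ P (u x)) -> P (fun g => \sum_x c x * u x g).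
Proof.
move=> H.
have H' : P (fun g => \sum_x c x * (if c x == 0 then (fun _ : gT => (0 : R)) else u x) g).
  apply: Psum => x; case: eqP => [_|cx]; first exact: P0.
  by case: (H x).
apply: (Pext H') => g; apply: eq_bigr => x _; case: eqP => [->|//]; by rewrite !mul0r.
Qed.

Lemma Pcomb (a b : R) {u v} : P u -> P v -> P (fun g => a * u g + b * v g).
Proof.
move=> Pu Pv.
have H : P (fun g => \sum_x (if x then a else b) * (if x then u else v) g).
  by apply: Psum; case.
by apply: (Pext H) => g; rewrite big_bool.
Qed.

Lemma row_step (W : weights R gT m) (eta : R) i :
  P (wA W i) -> P (wB W i) -> P (wC W i) ->
  (forall j, (dotp (wA W j) (wA W i) = 0 /\ dotp (wB W j) (wB W i) = 0 /\
              dotp (wC W j) (wC W i) = 0) \/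
             (P (wA W j) /\ P (wB W j) /\ P (wC W j))) ->
  [/\ P (GD eta W ord0 i), P (GD eta W (lift ord0 ord0) i) & P (GD eta W ord_max i)].
Proof.
move=> PA PB PC Hj; split.
- have H1 : P (fun g => \sum_j (2 * (dotp (wB W j) (wB W i) * dotp (wC W j) (wC W i))) * wA W j g).
    apply: Psum0 => j; case: (Hj j) => [[_ [-> _]]|[Hx _]]; last by right.
    by left; rewrite mul0r mulr0.
  have H2 : P (fun g => \sum_a (2 * wB W i a) * wC W i (g * a)%g) by apply: Psum => a; apply: Pr.
  apply: (Pext (Pcomb 1 (- (eta * (#|gT|%:R ^+ 3)^-1)) PA (Pcomb 1 (-1) H1 H2))) => g.
  by rewrite /GD gradA /wA; ring.
- have H1 : P (fun g => \sum_j (2 * (dotp (wA W j) (wA W i) * dotp (wC W j) (wC W i))) * wB W j g).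
    apply: Psum0 => j; case: (Hj j) => [[-> _]|[_ [Hx _]]]; last by right.
    by left; rewrite mul0r mulr0.
  have H2 : P (fun g => \sum_a (2 * wA W i a) * wC W i (a * g)%g) by apply: Psum => a; apply: Pl.
  apply: (Pext (Pcomb 1 (- (eta * (#|gT|%:R ^+ 3)^-1)) PB (Pcomb 1 (-1) H1 H2))) => g.
  by rewrite /GD gradB /wB; ring.
- have H1 : P (fun g => \sum_j (2 * (dotp (wA W j) (wA W i) * dotp (wB W j) (wB W i))) * wC W j g).
    apply: Psum0 => j; case: (Hj j) => [[-> _]|[_ [_ Hx]]]; last by right.
    by left; rewrite mul0r mulr0.
  have H2 : P (fun g => \sum_a (2 * wA W i a) * wB W i (a^-1 * g)%g) by apply: Psum => a; apply: Pl.
  apply: (Pext (Pcomb 1 (- (eta * (#|gT|%:R ^+ 3)^-1)) PC (Pcomb 1 (-1) H1 H2))) => g.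
  by rewrite /GD gradC /wC; ring.
Qed.

End Gen.

Lemma dotpC (R : realType) (gT : finGroupType) (u v : gT -> R) : dotp u v = dotp v u.
Proof. by apply: eq_bigr => g _; rewrite mulrC. Qed.

Lemma k3 (k : 'I_3) : k = ord0 \/ k = lift ord0 ord0 \/ k = ord_max.
Proof.
case: k => [[|[|[|n]]] Hk].
- by left; apply/val_inj.
- by right; left; apply/val_inj.
- by right; right; apply/val_inj.
- by [].
Qed.

Lemma step (R : realType) (gT : finGroupType) (d : nat)
    (rho : mx_representation (complex R) [set: gT]%G d)
    (m : nat) (S1 : {set 'I_m}) (W : weights R gT m) (eta : R) :
  rows_split rho S1 W -> rows_split rho S1 (GD eta W).
Proof.
move=> H k i; split => Hi.
- case: (@row_step R gT m (in_Rrho rho) (@in_Rrho_sum R gT d rho)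
     (@in_Rrho_r R gT d rho) (@in_Rrho_l R gT d rho) W eta i
     ((H ord0 i).1 Hi) ((H (lift ord0 ord0) i).1 Hi) ((H ord_max i).1 Hi) _).
    move=> j; case: (boolP (j \in S1)) => Hj.
      by right; split; [|split]; apply: (H _ j).1.
    left; split; [|split]; rewrite dotpC; apply: (H _ j).2 => //; exact: (H _ i).1.
  by move=> h1 h2 h3; case: (k3 k) => [->|[->|->]].
- case: (@row_step R gT m (in_Rrho_perp rho) (@perp_sum R gT d rho)
     (@perp_r R gT d rho) (@perp_l R gT d rho) W eta i
     ((H ord0 i).2 Hi) ((H (lift ord0 ord0) i).2 Hi) ((H ord_max i).2 Hi) _).
    move=> j; case: (boolP (j \in S1)) => Hj.
      left; split; [|split]; apply: (H _ i).2 => //; exact: (H _ j).1.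
    by right; split; [|split]; apply: (H _ j).2.
  by move=> h1 h2 h3; case: (k3 k) => [->|[->|->]].
Qed.

Theorem mainTheorem13 (R : realType) (gT : finGroupType) (d : nat)
    (rho : mx_representation (complex R) [set: gT]%G d)
    (m : nat) (S1 : {set 'I_m}) (W : weights R gT m) :
  self_conjugate rho ->
  rows_split rho S1 W ->
  forall eta : R, 0 < eta ->
    rows_split rho S1 (GD eta W) /\
    (forall t : nat, rows_split rho S1 (iter t (GD eta) W)).
Proof.
move=> _ HW eta _; split; first exact: step.
by elim=> [|t IH] //=; apply: step.
Qed.
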